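(* Let $m,n,s,k,c$ be positive integers such that $2\leq s\leq n$, $2\leq k\leq m$ and $ms=nk$. Let $\Omega$ be a subset of size $nkc$ of an abelian group $\Gamma$, and set $d=\gcd(s,k)$. If there exists a diagonal $\mathrm{MS}_\Omega(\frac{nk}{d},\frac{nk}{d};d,d;c)$, then there exists an $\mathrm{MS}_\Omega(m,n;s,k;c)$. In particular, if there exists a diagonal $\mathrm{MS}^0_\Omega(\frac{nk}{d},\frac{nk}{d};d,d;c)$, then there exists a $\mathrm{MS}^0_\Omega(m,n;s,k;c)$.
   Context: Let $(\Gamma,+)$ be an abelian group and $\Omega\subseteq\Gamma$ with $|\Omega|>1$. A partially filled array is an array in which some cells may be empty. A magic partially filled array set $\mathrm{MS}_\Omega(m,n;s,k;c)$ is a set of $c$ partially filled $m\times n$ arrays with entries in $\Omega$ such that every element of $\Omega$ appears exactly once in exactly one of the arrays, every array has $s$ filled cells in each row and $k$ in each column, and there exist $x,y\in\Gamma$ such that in every array each row sums to $x$ and each column sums to $y$; it is zero-sum, written $\mathrm{MS}^0_\Omega(m,n;s,k;c)$, if $x=y=0_\Gamma$. For an $N\times N$ partially filled array $A=(a_{i,j})$, the cell $(i,j)$ belongs to the diagonal $D_r$ if $j-i\equiv r\pmod N$; $A$ is $\ell$-diagonal if its nonempty cells are exactly the cells of $\ell$ consecutive diagonals $D_r,D_{r+1},\ldots,D_{r+\ell-1}$ (indices mod $N$). An $\mathrm{MS}_\Omega(N,N;d,d;c)$ is diagonal if every one of its arrays is $d$-diagonal. *)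

(* Defs.v *)
From HB Require Import structures.
From mathcomp Require Import all_boot all_order all_algebra.
Set Implicit Arguments. Unset Strict Implicit. Unset Printing Implicit Defensive.
Import GRing.Theory.
Local Open Scope ring_scope.

(* A partially filled m x n array with entries in G: [None] = empty cell. *)
Definition pfarray (G : zmodType) (m n : nat) := 'M[option G]_(m, n).

Definition filled (G : zmodType) (a : option G) : bool := a != None.

Definition row_sum (G : zmodType) m n (A : pfarray G m n) (i : 'I_m) : G :=
  \sum_(j < n) odflt 0 (A i j).
Definition col_sum (G : zmodType) m n (A : pfarray G m n) (j : 'I_n) : G :=
  \sum_(i < m) odflt 0 (A i j).

Definition MS_with (G : zmodType) (Omega : seq G) (m n s k c : nat)
    (A : 'I_c -> pfarray G m n) (x y : G) : Prop :=
  [/\ (forall t i j a, A t i j = Some a -> a \in Omega),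
      (forall a, a \in Omega ->
         #|[set tij : 'I_c * 'I_m * 'I_n | A tij.1.1 tij.1.2 tij.2 == Some a]| = 1%N),
      (forall t i, #|[set j | filled (A t i j)]| = s),
      (forall t j, #|[set i | filled (A t i j)]| = k) &
      (forall t i, row_sum (A t) i = x) /\
      (forall t j, col_sum (A t) j = y)].

Definition is_MS (G : zmodType) (Omega : seq G) (m n s k c : nat)
    (A : 'I_c -> pfarray G m n) : Prop :=
  exists x y, MS_with Omega s k A x y.

Definition is_MS0 (G : zmodType) (Omega : seq G) (m n s k c : nat)
    (A : 'I_c -> pfarray G m n) : Prop :=
  MS_with Omega s k A 0 0.

(* Cell (i,j) of an N x N array lies on diagonal D_r iff j - i = r (mod N). *)
Definition on_diag (N : nat) (i j : 'I_N) (r : nat) : bool :=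
  ((j + N - i) %% N == r %% N)%N.

Definition l_diagonal (G : zmodType) (N l : nat) (A : pfarray G N N) : Prop :=
  exists r : nat, forall i j : 'I_N,
    filled (A i j) = [exists h : 'I_l, on_diag i j (r + h)].

Definition is_diag_MS (G : zmodType) (Omega : seq G) (N d c : nat)
    (A : 'I_c -> pfarray G N N) : Prop :=
  is_MS Omega d d A /\ forall t, l_diagonal d (A t).

Definition is_diag_MS0 (G : zmodType) (Omega : seq G) (N d c : nat)
    (A : 'I_c -> pfarray G N N) : Prop :=
  is_MS0 Omega d d A /\ forall t, l_diagonal d (A t).

(* Main.v *)
Set Warnings "-all".
Require Import Defs.
From mathcomp Require Import all_boot all_order all_algebra zify ring lra.
Import GRing.Theory Num.Theory.

Section Lift.
Variables (G : zmodType) (X Y : finType) (f : X -> Y) (a : X -> option G).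
Let S := [set x | filled (a x)].
Hypothesis inj : {in S &, injective f}.
Definition lift y : option G := if [pick x in S | f x == y] is Some x then a x else None.

Lemma lift_f x : x \in S -> lift (f x) = a x.
Proof.
move=> Sx; rewrite /lift; case: pickP => [x' /andP[Sx' /eqP e]|/(_ x)].
  by rewrite (inj _ _ Sx' Sx e).
by rewrite Sx eqxx.
Qed.

Lemma lift_out y : y \notin f @: S -> lift y = None.
Proof.
rewrite /lift; case: pickP => // x /andP[Sx /eqP <-]; by rewrite imset_f.
Qed.

Lemma lift_big R idx (op : Monoid.com_law idx) (F : option G -> R) (Q : pred Y) :
  F None = idx ->
  \big[op/idx]_(y | Q y) F (lift y) = \big[op/idx]_(x | Q (f x)) F (a x).
Proof.
move=> F0.
rewrite big_mkcond (bigID (mem (f @: S))) /= [X in op _ X]big1 ?Monoid.mulm1; last first.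
  by move=> y /lift_out ->; case: (Q y).
rewrite big_imset /=; last exact: inj.
rewrite [in RHS]big_mkcond [in RHS](bigID (mem S)) /=.
rewrite [X in _ = op _ X]big1 ?Monoid.mulm1; last first.
  move=> x; rewrite inE /filled negbK => /eqP ->; by case: (Q (f x)).
by apply: eq_bigr => x Sx; rewrite lift_f.
Qed.
End Lift.
Arguments lift {G X Y}.
Arguments lift_f {G X Y f a}.
Arguments lift_out {G X Y f a}.
Arguments lift_big {G X Y f a}.


Lemma card_sum (T : finType) (Q : pred T) : #|[set z | Q z]| = \sum_z (Q z : nat).
Proof.
rewrite -sum1_card big_mkcond /=; apply: eq_bigr => z _; rewrite inE; by case: (Q z).
Qed.

Lemma sum_row R idx (op : Monoid.com_law idx) (I J : finType) (P : pred I) (F : I -> J -> R) :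
  \big[op/idx]_(y : I * J | P y.1) F y.1 y.2 = \big[op/idx]_(i | P i) \big[op/idx]_j F i j.
Proof.
rewrite (pair_big_dep P (fun _ _ => true)); apply: eq_bigl => y; by rewrite andbT.
Qed.

Lemma sum_col R idx (op : Monoid.com_law idx) (I J : finType) (P : pred J) (F : I -> J -> R) :
  \big[op/idx]_(y : I * J | P y.2) F y.1 y.2 = \big[op/idx]_(j | P j) \big[op/idx]_i F i j.
Proof.
rewrite exchange_big (pair_big_dep xpredT (fun _ j => P j)); by apply: eq_bigl.
Qed.

Arguments sum_row {R idx} op {I J}.
Arguments sum_col {R idx} op {I J}.

Lemma count_mod (N m q a : nat) : (0 < m)%N -> (a < m)%N -> N = (m * q)%N ->
  #|[pred i : 'I_N | i %% m == a]| = q.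
Proof.
move=> m0 am ->.
have -> : #|[pred i : 'I_(m*q) | i %% m == a]| = (\sum_(i < m*q | i %% m == a) 1)%N by rewrite sum1_card.
rewrite -(big_mkord (fun i => i %% m == a) (fun _ => 1%N)) sum1_count /index_iota subn0.
elim: q => [|q IH]; first by rewrite muln0.
rewrite mulnS addnC iotaD count_cat IH.
have -> : iota (0 + m*q) m = [seq m*q + i | i <- iota 0 m] by rewrite add0n -{1}[(m*q)%N]addn0 iotaDl.
rewrite count_map.
rewrite -[RHS]addn1; congr addn.
rewrite (@eq_in_count _ _ (pred1 a)); last first.
  by move=> i; rewrite mem_iota add0n => /andP[_ im] /=; rewrite mulnC modnMDl modn_small.
by rewrite count_uniq_mem ?iota_uniq // mem_iota am.
Qed.

Lemma card3 (I J K : finType) (P : I -> J -> K -> bool) :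
  #|[set x : I * J * K | P x.1.1 x.1.2 x.2]| = (\sum_i \sum_(y : J * K) (P i y.1 y.2 : nat))%N.
Proof.
rewrite card_sum -(pair_bigA _ (fun tp k => (P tp.1 tp.2 k : nat))).
rewrite -(pair_bigA _ (fun i j => \sum_k (P i j k : nat))%N).
by apply: eq_bigr => i _; rewrite -(pair_bigA _ (fun j k => (P i j k : nat))).
Qed.
Arguments card3 {I J K}.

Section Keys.
Local Open Scope ring_scope.
Lemma key_int (u s' k' i j i' j' h h' a b p p' r : int) :
  0 < u -> 0 < s' -> 0 < k' -> coprimez s' k' ->
  0 <= h < u -> 0 <= h' < u ->
  0 <= i < u*s'*k' -> 0 <= j < u*s'*k' -> 0 <= i' < u*s'*k' -> 0 <= j' < u*s'*k' ->
  i = i' + a*(u*k') -> j = j' + b*(u*s') ->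
  j - i = r + h + p*(u*s'*k') -> j' - i' = r + h' + p'*(u*s'*k') ->
  i = i' /\ j = j'.
Proof.
move=> u0 s0 k0 cop /andP[h0 hu] /andP[h0' hu'] /andP[i0 iN] /andP[j0 jN]
  /andP[i0' iN'] /andP[j0' jN'] ei ej e1 e2.
set X := b*s' - a*k' - (p-p')*s'*k'.
have eX : u * X = h - h'.
  have : (j - i) - (j' - i') = (r + h + p*(u*s'*k')) - (r + h' + p'*(u*s'*k')) by rewrite e1 e2.
  rewrite ei ej /X => e.
  have -> : h - h' = (r + h + p*(u*s'*k')) - (r + h' + p'*(u*s'*k')) - (p-p')*(u*s'*k') by ring.
  rewrite -e; ring.
have X0 : X = 0.
  case: (ltrgtP X 0) => // hX.
  - have : u * X <= - u by rewrite -mulrN1 ler_pM2l // -gtzE_ltz ?ltzD1 //; lia.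
    lia.
  - have : u <= u * X by rewrite -{1}(mulr1 u) ler_pM2l //; lia.
    lia.
have ea : a * k' = s' * (b - (p-p')*k').
  have -> : a*k' = (b*s' - (p-p')*s'*k') - X by rewrite /X; ring.
  rewrite X0; ring.
have : (s' %| a * k')%Z by rewrite ea dvdz_mulr.
rewrite Gauss_dvdzl // => /dvdzP [q eq].
have eii : i - i' = q * (u*s'*k') by rewrite ei eq; ring.
have q0 : q = 0.
  case: (ltrgtP q 0) => // hq.
  - have : q * (u*s'*k') <= - (u*s'*k').
      rewrite -mulN1r ler_pM2r; [lia| by rewrite !mulr_gt0].
    lia.
  - have : (u*s'*k') <= q * (u*s'*k').
      rewrite -{1}(mul1r (u*s'*k')) ler_pM2r; [lia| by rewrite !mulr_gt0].
    lia.
have ii : i = i' by move: eii; rewrite q0 mul0r => /eqP; rewrite subr_eq0 => /eqP.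
split => //.
have eb : b = (p - p') * k'.
  apply: (mulIf (lt0r_neq0 s0)).
  move: ea; rewrite eq q0 !mul0r => /eqP; rewrite eq_sym mulf_eq0 (negbTE (lt0r_neq0 s0)) /= subr_eq0 => /eqP ->.
  ring.
have ejj : j - j' = (p - p') * (u*s'*k') by rewrite ej eb; ring.
set w := p - p' in ejj.
have w0 : w = 0.
  case: (ltrgtP w 0) => // hq.
  - have : w * (u*s'*k') <= - (u*s'*k').
      rewrite -mulN1r ler_pM2r; [lia| by rewrite !mulr_gt0].
    lia.
  - have : (u*s'*k') <= w * (u*s'*k').
      rewrite -{1}(mul1r (u*s'*k')) ler_pM2r; [lia| by rewrite !mulr_gt0].
    lia.
by move: ejj; rewrite w0 mul0r => /eqP; rewrite subr_eq0 => /eqP.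
Qed.

Lemma modeq_int (x y q : nat) : (x %% q = y %% q)%N ->
  (x%:Z = y%:Z + ((x %/ q)%N%:Z - (y %/ q)%N%:Z) * q%:Z).
Proof.
move=> e; rewrite {1}(divn_eq x q) {1}(divn_eq y q) e !PoszD !PoszM; ring.
Qed.

Arguments modeq_int {x y q}.

Lemma key_nat (u s' k' d r i j i' j' h h' : nat) :
  (0 < u)%N -> (0 < s')%N -> (0 < k')%N -> coprime s' k' -> (d <= u)%N ->
  (h < d)%N -> (h' < d)%N ->
  (i < u*s'*k')%N -> (j < u*s'*k')%N -> (i' < u*s'*k')%N -> (j' < u*s'*k')%N ->
  (i %% (u*k') = i' %% (u*k'))%N -> (j %% (u*s') = j' %% (u*s'))%N ->
  ((j + u*s'*k' - i) %% (u*s'*k') = (r + h) %% (u*s'*k'))%N ->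
  ((j' + u*s'*k' - i') %% (u*s'*k') = (r + h') %% (u*s'*k'))%N ->
  i = i' /\ j = j'.
Proof.
move=> u0 s0 k0 cop du hd hd' iN jN iN' jN' ei ej e1 e2.
have := modeq_int ei; have := modeq_int ej.
have := modeq_int e1; have := modeq_int e2.
set N := (u*s'*k')%N.
rewrite -[Posz (j' + N - i')]subzn ?(ltnW (leq_trans iN' (leq_addl _ _))) //.
rewrite -[Posz (j + N - i)]subzn ?(ltnW (leq_trans iN (leq_addl _ _))) // !PoszD.
move=> f2 f1 fj fi.
suff [] : i%:Z = i' /\ j%:Z = j' by move=> [] -> [] ->.
rewrite PoszM in fi; rewrite PoszM in fj.
have iN2 : (i < N :> int) by rewrite ltz_nat.
have iN2' : (i' < N :> int) by rewrite ltz_nat.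
have jN2 : (j < N :> int) by rewrite ltz_nat.
have jN2' : (j' < N :> int) by rewrite ltz_nat.
rewrite /N !PoszM in iN2 iN2' jN2 jN2' f1 f2.
apply: (@key_int u s' k' i j i' j' h h' _ _
  (((j + N - i) %/ N)%N%:Z - ((r + h) %/ N)%N%:Z - 1)
  (((j' + N - i') %/ N)%N%:Z - ((r + h') %/ N)%N%:Z - 1) r _ _ _ _ _ _ _ _ _ _ fi fj).
- by rewrite ltz_nat.
- by rewrite ltz_nat.
- by rewrite ltz_nat.
- by rewrite coprimezE.
- by rewrite lez_nat ltz_nat (leq_trans hd du).
- by rewrite lez_nat ltz_nat (leq_trans hd' du).
- by rewrite lez_nat iN2.
- by rewrite lez_nat jN2.
- by rewrite lez_nat iN2'.
- by rewrite lez_nat jN2'.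
- rewrite /N; have -> : (j%:Z - i%:Z = (j%:Z + u%:Z*s'%:Z*k'%:Z - i%:Z) - u%:Z*s'%:Z*k'%:Z) by ring.
  rewrite f1; ring.
- rewrite /N; have -> : (j'%:Z - i'%:Z = (j'%:Z + u%:Z*s'%:Z*k'%:Z - i'%:Z) - u%:Z*s'%:Z*k'%:Z) by ring.
  rewrite f2; ring.
Qed.

End Keys.

Section Cons.
Local Open Scope ring_scope.
Lemma construct (G : zmodType) (u s' k' d c : nat) (Omega : seq G)
  (A : 'I_c -> pfarray G (u*s'*k') (u*s'*k')) (x y : G) :
  (0 < u)%N -> (0 < s')%N -> (0 < k')%N -> coprime s' k' -> (d <= u)%N ->
  MS_with Omega d d A x y -> (forall t, l_diagonal d (A t)) ->
  exists B : 'I_c -> pfarray G (u*k') (u*s'),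
    MS_with Omega (s'*d) (k'*d) B (x *+ s')%R (y *+ k')%R.
Proof.
move=> u0 s0 k0 cop du [Hin Hcnt Hrow Hcol [Hrs Hcs]] Hdiag.
have M0 : (0 < u*k')%N by rewrite muln_gt0 u0.
have N0 : (0 < u*s')%N by rewrite muln_gt0 u0.
pose phi (z : 'I_(u*s'*k') * 'I_(u*s'*k')) : 'I_(u*k') * 'I_(u*s') :=
  (Ordinal (ltn_pmod z.1 M0), Ordinal (ltn_pmod z.2 N0)).
pose a t (z : 'I_(u*s'*k') * 'I_(u*s'*k')) : option G := A t z.1 z.2.
have inj t : {in [set z | filled (a t z)] &, injective phi}.
  move=> [i j] [i' j']; rewrite !inE /a /= => f1 f2.
  move=> /(congr1 (fun p => (val p.1, val p.2))) /= [e1 e2].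
  case: (Hdiag t) => r Hr.
  move: f1 f2; rewrite !Hr => /existsP[h hh] /existsP[h' hh'].
  have [] := @key_nat _ _ _ _ r _ _ _ _ _ _ u0 s0 k0 cop du (ltn_ord h) (ltn_ord h') (ltn_ord i) (ltn_ord j)
     (ltn_ord i') (ltn_ord j') e1 e2 (eqP hh) (eqP hh').
  by move=> ei ej; congr pair; apply: val_inj.
pose B t : pfarray G (u*k') (u*s') := \matrix_(i, j) lift phi (a t) (i, j).
have rowchain : forall R idx (op : Monoid.com_law idx) (F : option G -> R), F None = idx ->
  forall t (i : 'I_(u*k')), \big[op/idx]_j F (B t i j) =
    \big[op/idx]_(i0 : 'I_(u*s'*k') | (i0 %% (u*k') == i)%N) \big[op/idx]_j F (A t i0 j).
  move=> R idx op F F0 t i.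
  transitivity (\big[op/idx]_j F (lift phi (a t) (i, j))); first by apply: eq_bigr => j _; rewrite mxE.
  rewrite -(big_pred1_eq op i (fun i' => \big[op/idx]_j F (lift phi (a t) (i', j)))).
  rewrite -(sum_row op (fun i' => i' == i) (fun i' j => F (lift phi (a t) (i', j)))).
  transitivity (\big[op/idx]_(y | y.1 == i) F (lift phi (a t) y)); first by apply: eq_bigr => -[].
  rewrite (lift_big (inj t) _ _ op F (fun y => y.1 == i) F0).
  rewrite -(sum_row op (fun i0 : 'I_(u*s'*k') => i0 %% (u*k') == i)%N (fun i0 j => F (A t i0 j))).
  by apply: eq_big => [[i0 j0]|[i0 j0] _] //=; rewrite -val_eqE.
have colchain : forall R idx (op : Monoid.com_law idx) (F : option G -> R), F None = idx ->
  forall t (j : 'I_(u*s')), \big[op/idx]_i F (B t i j) =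
    \big[op/idx]_(j0 : 'I_(u*s'*k') | (j0 %% (u*s') == j)%N) \big[op/idx]_i F (A t i j0).
  move=> R idx op F F0 t j.
  transitivity (\big[op/idx]_i F (lift phi (a t) (i, j))); first by apply: eq_bigr => i _; rewrite mxE.
  rewrite -(big_pred1_eq op j (fun j' => \big[op/idx]_i F (lift phi (a t) (i, j')))).
  rewrite -(sum_col op (fun j' => j' == j) (fun i j' => F (lift phi (a t) (i, j')))).
  transitivity (\big[op/idx]_(y | y.2 == j) F (lift phi (a t) y)); first by apply: eq_bigr => -[].
  rewrite (lift_big (inj t) _ _ op F (fun y => y.2 == j) F0).
  rewrite -(sum_col op (fun j0 : 'I_(u*s'*k') => j0 %% (u*s') == j)%N (fun i j0 => F (A t i j0))).
  by apply: eq_big => [[i0 j0]|[i0 j0] _] //=; rewrite -val_eqE.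
exists B; split.
- move=> t i j v; rewrite mxE.
  case: (boolP ((i,j) \in phi @: [set z | filled (a t z)])) => [/imsetP [z Sz ->]|/lift_out -> //].
  rewrite (lift_f (inj t)) // => /Hin; exact.
- move=> v Ov; rewrite -(Hcnt v Ov) (card3 (fun t i j => B t i j == Some v)) (card3 (fun t i j => A t i j == Some v)); apply: eq_bigr => t _.
  transitivity (\sum_(y : 'I_(u*k') * 'I_(u*s')) ((lift phi (a t) y == Some v) : nat))%N.
    by apply: eq_bigr => -[i j] _; rewrite mxE.
  by rewrite (lift_big (inj t) _ _ _ (fun o => nat_of_bool (o == Some v)) xpredT).
- move=> t i; rewrite card_sum (rowchain _ _ _ (fun o => nat_of_bool (filled o))) //.
  rewrite (eq_bigr (fun _ => d)); last by move=> i0 _; rewrite -(Hrow t i0) card_sum.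
  rewrite sum_nat_const (@count_mod _ (u*k') s') //; last by rewrite mulnAC.
- move=> t j; rewrite card_sum (colchain _ _ _ (fun o => nat_of_bool (filled o))) //.
  rewrite (eq_bigr (fun _ => d)); last by move=> j0 _; rewrite -(Hcol t j0) card_sum.
  rewrite sum_nat_const (@count_mod _ (u*s') k') //.
- split => t i.
  + rewrite /row_sum (rowchain _ _ _ (fun o => odflt 0 o)) //.
    rewrite (eq_bigr (fun _ => x)); last by move=> i0 _; rewrite -(Hrs t i0).
    by rewrite sumr_const (@count_mod _ (u*k') s') // mulnAC.
  + rewrite /col_sum (colchain _ _ _ (fun o => odflt 0 o)) //.
    rewrite (eq_bigr (fun _ => y)); last by move=> j0 _; rewrite -(Hcs t j0).
    by rewrite sumr_const (@count_mod _ (u*s') k').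
Qed.
End Cons.

Theorem mainTheorem3 (G : zmodType) (m n s k c : nat) (Omega : seq G) :
  (0 < m)%N -> (0 < n)%N -> (0 < c)%N ->
  (2 <= s <= n)%N -> (2 <= k <= m)%N -> (m * s = n * k)%N ->
  uniq Omega -> size Omega = (n * k * c)%N ->
  let d := gcdn s k in
  let N := ((n * k) %/ d)%N in
  ((exists A : 'I_c -> pfarray G N N, is_diag_MS Omega d A) ->
     exists B : 'I_c -> pfarray G m n, is_MS Omega s k B)
  /\
  ((exists A : 'I_c -> pfarray G N N, is_diag_MS0 Omega d A) ->
     exists B : 'I_c -> pfarray G m n, is_MS0 Omega s k B).
Proof.
move=> m0 n0 c0 /andP[s2 sn] /andP[k2 km] ems _ _ d N.
have d0 : (0 < d)%N by rewrite /d gcdn_gt0 (leq_trans _ s2).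
have [s' es] : exists s', s = (s' * d)%N by exists (s %/ d); rewrite divnK // dvdn_gcdl.
have [k' ek] : exists k', k = (k' * d)%N by exists (k %/ d); rewrite divnK // dvdn_gcdr.
have cop : coprime s' k'.
  rewrite /coprime -(eqn_pmul2r d0) mul1n muln_gcdl -es -ek.
  by [].
have s0 : (0 < s')%N by rewrite lt0n; apply/eqP => e; move: s2; rewrite es e.
have k0 : (0 < k')%N by rewrite lt0n; apply/eqP => e; move: k2; rewrite ek e.
have ems' : (m * s' = n * k')%N.
  by apply/eqP; rewrite -(eqn_pmul2r d0) -!mulnA -es -ek ems.
have [u en] : exists u, n = (u * s')%N.
  exists (n %/ s'); rewrite divnK //.
  by rewrite -(Gauss_dvdl n cop) -ems' dvdn_mull.
have em : m = (u * k')%N.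
  by apply/eqP; rewrite -(eqn_pmul2r s0) ems' en mulnAC.
have u0 : (0 < u)%N by rewrite lt0n; apply/eqP => e; move: n0; rewrite en e.
have du : (d <= u)%N.
  by rewrite -(leq_pmul2l s0) -es [X in (_ <= X)%N]mulnC -en.
have eN : N = (u * s' * k')%N by rewrite /N en ek mulnA mulnK.
clearbody N d.
subst N m n s k.
split.
- move=> [A [[x [y HA]] Hd]].
  have [B HB] := @construct _ _ _ _ _ _ _ _ _ _ u0 s0 k0 cop du HA Hd.
  by exists B; exists (x *+ s')%R, (y *+ k')%R.
- move=> [A [HA Hd]].
  have [B HB] := @construct _ _ _ _ _ _ _ _ _ _ u0 s0 k0 cop du HA Hd.
  by exists B; move: HB; rewrite !mul0rn.
Qed.
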